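(* The algorithm HashNWalk (with a single summary) takes $O(|e|+\min(M,|e|)^2)$ time to process a hyperedge $e$.
   Context: Input: a stream of hyperedges $(e_i,t_i)$, each $e_i$ a nonempty subset of a node set $V$ with timestamp $t_i$; parameters: number of supernodes $M$, time-decay $\alpha\in(0,1)$. A hash function $h:V\to\{1,\dots,M\}$ evaluable in $O(1)$ time is fixed. The algorithm maintains $S\in\mathbb{R}^{M\times M}$ and $T\in\mathbb{R}^M$, initialized to zero. Processing hyperedge $e$ arriving at time $t$ consists of: (i) computing the sparse vector $m(e)\in\mathbb{Z}^M$, $m_k(e)=\sum_{v\in e}\mathds{1}(h(v)=k)$, and $\tilde e=\{k:m_k(e)>0\}$; (ii) updating, for all $u,v$, $S_{uv}\leftarrow S_{uv}+\alpha^{-t}\mathds{1}(u\in\tilde e)m_v(e)/|e|$ and $T_u\leftarrow T_u+\alpha^{-t}\mathds{1}(u\in\tilde e)$ (only entries with $u,v\in\tilde e$ change); (iii) computing the two anomaly scores $\mathsf{score_U}(e)$ and $\mathsf{score_B}(e)$, where $\mathsf{score}(e)=\mathsf{aggregate}_{u,v\in\tilde e}\big(d_{u,t}^{\beta}\log(a_{uv}/s_{uv})\big)$ with $a_{uv}=m_v(e)/|e|$, $s_{uv}=\tilde P_{uv}=S_{uv}/T_u$ (the summary just before $t$), $d_{u,t}$ the maintained number of occurrences of supernode $u$ at time $t$; $\mathsf{score_U}$ uses $\beta=0$ and $\mathsf{aggregate}=\max$, and $\mathsf{score_B}$ uses $\beta=1$ and $\mathsf{aggregate}=$ mean over all ordered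 pairs. The computational model is the RAM model with $O(1)$-time arithmetic (including $\log$ and powers) and $O(1)$-time sparse vector/hash table operations. *)

(* Defs.v *)
(* A cost-instrumented model of the RAM-model execution of
   HashNWalk's per-hyperedge processing.  Every elementary RAM operation
   (O(1) arithmetic incl. log/power, one hash evaluation, one hash-table
   lookup or update) is wrapped in [op], which charges exactly 1 unit;
   every loop iteration additionally charges 1 unit ([forC]). *)
From Stdlib Require Import Reals List Arith Lia.
Import ListNotations.

Definition C (A : Type) : Type := (A * nat)%type.
Definition ret {A} (x : A) : C A := (x, 0%nat).
Definition op {A} (x : A) : C A := (x, 1%nat).
Definition bind {A B} (m : C A) (f : A -> C B) : C B :=
  let (x, c1) := m in let (y, c2) := f x in (y, (c1 + c2)%nat).
Notation "x <- m ;; k" := (bind m (fun x => k))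
  (at level 61, m at next level, right associativity).

Fixpoint forC {A B} (l : list A) (acc : B) (body : B -> A -> C B) : C B :=
  match l with
  | [] => ret acc
  | x :: l' => _ <- op tt ;; acc' <- body acc x ;; forC l' acc' body
  end.

(* hash tables with default values, modelled functionally; an update is one
   O(1) hash-table operation (charged via [op] at the call site). *)
Definition upd {V} (f : nat -> V) (k : nat) (v : V) : nat -> V :=
  fun k' => if Nat.eqb k' k then v else f k'.
Definition upd2 {V} (f : nat -> nat -> V) (u w : nat) (v : V) : nat -> nat -> V :=
  fun u' w' => if andb (Nat.eqb u' u) (Nat.eqb w' w) then v else f u' w'.

(* Maintained summary: S (M x M, sparse), T (length M), and occurrence
   counts d of supernodes. *)
Record State := mkState {
  S_ : nat -> nat -> R;
  T_ : nat -> R;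
  D_ : nat -> R }.

Definition init_state : State := mkState (fun _ _ => 0%R) (fun _ => 0%R) (fun _ => 0%R).

(* Processing of one hyperedge e (list of distinct nodes) arriving at time t.
   Returns the new state and (score_U, score_B), together with the number of
   elementary operations performed. *)
Definition process (M : nat) (alpha : R) (h : nat -> nat) (st : State)
    (e : list nat) (t : R) : C (State * (R * R)) :=
  (* (i) sparse vector m(e), its support e~ (list of keys), |e~|, and |e| *)
  p <- forC e ((fun _ => 0%nat), @nil nat, 0%nat, 0%nat)
        (fun '(m, keys, nk, sz) v =>
           k <- op (h v) ;;
           mk <- op (m k) ;;
           keys' <- op (if Nat.eqb mk 0 then k :: keys else keys) ;;
           nk' <- op (if Nat.eqb mk 0 then S nk else nk) ;;
           m' <- op (upd m k (S mk)) ;;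
           sz' <- op (S sz) ;;
           ret (m', keys', nk', sz')) ;;
  let '(m, et, nk, sz) := p in
  w <- op (Rpower alpha (- t)) ;;
  D' <- forC et (D_ st) (fun D u => du <- op (D u) ;; op (upd D u (du + 1)%R)) ;;
  (* (iii) scores, using the summary S,T just before t *)
  sc <- forC et (@None R, 0%R) (fun acc u =>
          forC et acc (fun '(mx, sm) v =>
            Suv <- op (S_ st u v) ;;
            Tu <- op (T_ st u) ;;
            mv <- op (m v) ;;
            du <- op (D' u) ;;
            a <- op (INR mv / INR sz)%R ;;
            s <- op (Suv / Tu)%R ;;
            l <- op (ln (a / s)) ;;
            mx' <- op (match mx with None => Some l | Some x => Some (Rmax x l) end) ;;
            sm' <- op (sm + du * l)%R ;;
            ret (mx', sm'))) ;;
  let '(mx, sm) := sc in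
  scoreU <- op (match mx with None => 0%R | Some x => x end) ;;
  scoreB <- op (sm / (INR nk * INR nk))%R ;;
  ST <- forC et (S_ st, T_ st) (fun '(Sa, Ta) u =>
          tu <- op (Ta u) ;;
          Ta' <- op (upd Ta u (tu + w)%R) ;;
          Sa' <- forC et Sa (fun Sa v =>
                   suv <- op (Sa u v) ;;
                   mv <- op (m v) ;;
                   op (upd2 Sa u v (suv + w * INR mv / INR sz)%R)) ;;
          ret (Sa', Ta')) ;;
  ret (mkState (fst ST) (snd ST) D', (scoreU, scoreB)).

Definition process_time M alpha h st e t : nat := snd (process M alpha h st e t).

(* Main.v *)
Require Import Defs.
From Stdlib Require Import Reals List Arith Lia.
Import ListNotations.

Lemma snd_bind {A B} (m : Defs.C A) (f : A -> Defs.C B) : snd (bind m f) = (snd m + snd (f (fst m)))%nat.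
Proof. destruct m as [x c]; simpl; destruct (f x); reflexivity. Qed.
Lemma fst_bind {A B} (m : Defs.C A) (f : A -> Defs.C B) : fst (bind m f) = fst (f (fst m)).
Proof. destruct m as [x c]; simpl; destruct (f x); reflexivity. Qed.

Lemma forC_cost {A B} (l : list A) (acc : B) body b :
  (forall a x, (snd (body a x) <= b)%nat) -> (snd (forC l acc body) <= length l * S b)%nat.
Proof.
  intros H; revert acc; induction l as [|x l IH]; intros acc; simpl; [lia|].
  unfold bind at 1; simpl. specialize (H acc x). destruct (body acc x) as [a c] eqn:E.
  specialize (IH a). destruct (forC l a body). simpl in *. lia.
Qed.

Lemma forC_inv {A B} (P : B -> Prop) (l : list A) (acc : B) body :
  P acc -> (forall a x, P a -> P (fst (body a x))) -> P (fst (forC l acc body)).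
Proof.
  intros H0 H; revert acc H0; induction l as [|x l IH]; intros acc H0; simpl; [auto|].
  unfold bind at 1; simpl. specialize (H acc x H0). destruct (body acc x) as [a c] eqn:E.
  simpl in H. specialize (IH a H). destruct (forC l a body). simpl in *. auto.
Qed.

Lemma forC_inv2 {A B} (P : nat -> B -> Prop) (l : list A) (acc : B) body :
  P 0%nat acc -> (forall n a x, P n a -> P (S n) (fst (body a x))) -> P (length l) (fst (forC l acc body)).
Proof.
  intros H0 H. enough (forall n acc, P n acc -> P (n + length l)%nat (fst (forC l acc body))) as G by exact (G 0%nat acc H0).
  induction l as [|x l IH]; intros n acc' Hn; simpl; [rewrite Nat.add_0_r; auto|].
  unfold bind at 1; simpl. specialize (H n acc' x Hn). destruct (body acc' x) as [a c] eqn:E.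
  simpl in H. specialize (IH (S n) a H). destruct (forC l a body). simpl in *. rewrite <- plus_n_Sm. auto.
Qed.

Lemma nodup_range_len M (l : list nat) : NoDup l -> (forall x, In x l -> 1 <= x <= M)%nat -> (length l <= M)%nat.
Proof.
  intros Hn Hr.
  assert (incl l (seq 1 M)) as Hi.
  { intros x Hx; apply in_seq; specialize (Hr x Hx); lia. }
  pose proof (NoDup_incl_length Hn Hi) as H; rewrite length_seq in H; exact H.
Qed.

Theorem theorem1 :
  exists c : nat,
    forall (M : nat) (alpha : R) (h : nat -> nat) (st : State)
           (e : list nat) (t : R),
      (1 <= M)%nat ->
      (0 < alpha < 1)%R ->
      (forall v, 1 <= h v <= M)%nat ->
      e <> [] ->
      NoDup e ->
      (process_time M alpha h st e t
         <= c * (length e + Nat.min M (length e) ^ 2))%nat.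
Proof.
  exists 24%nat. intros M alpha h st e t HM Ha Hh Hne Hnd.
  unfold process_time, process.
  rewrite snd_bind.
  match goal with |- context [forC e ?a0 ?bd] =>
    assert (Hc1 : (snd (forC e a0 bd) <= length e * 7)%nat) by
      (apply forC_cost; intros a x; destruct a as [[[m keys] nk] sz]; cbn; lia);
    assert (Hinv : let '(m, keys, nk, sz) := fst (forC e a0 bd) in
       NoDup keys /\ (forall x, In x keys -> m x <> 0 /\ 1 <= x <= M)%nat /\ (length keys <= length e)%nat);
    [|generalize dependent (forC e a0 bd)] end.
  { apply (forC_inv2 (fun n p => let '(m, keys, nk, sz) := p in
       NoDup keys /\ (forall x, In x keys -> m x <> 0 /\ 1 <= x <= M)%nat /\ (length keys <= n)%nat)).
    - cbn. split; [constructor|]. split; [intros x []|lia].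
    - intros n a x Ha0. destruct a as [[[m keys] nk] sz]. cbn.
      destruct Ha0 as [A1 [A2 A3]].
      destruct (Nat.eqb (m (h x)) 0) eqn:E.
      + apply Nat.eqb_eq in E. split; [|split].
        * constructor; auto. intros Hin. apply A2 in Hin. lia.
        * intros y [<-|Hy]; unfold upd; rewrite ?Nat.eqb_refl; split; auto.
          destruct (Nat.eqb y (h x)); [lia|]. apply A2; auto. apply A2; auto.
        * simpl; lia.
      + apply Nat.eqb_neq in E. split; [auto|split].
        * intros y Hy; unfold upd. destruct (Nat.eqb y (h x)); split; auto; try lia; apply A2; auto.
        * lia. }
  intros [[[[m keys] nk] sz] c1] Hc1 Hinv. simpl in Hc1, Hinv. cbn [fst snd].
  destruct Hinv as [Hk1 [Hk2 Hk3]].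
  assert (Hk : (length keys <= Nat.min M (length e))%nat).
  { apply Nat.min_glb; auto. apply nodup_range_len; auto. intros x Hx; apply Hk2; auto. }
  repeat (rewrite snd_bind).
  match goal with |- context [let '(_,_) := ?p in _] => destruct p end.
  repeat (rewrite snd_bind). cbn [snd fst op ret].
  set (k := length keys) in *.
  match goal with |- context [snd (forC keys (D_ st) ?bd)] =>
    assert (H1 : (snd (forC keys (D_ st) bd) <= k * 3)%nat)
      by (apply forC_cost; intros a x; cbn; lia);
    generalize dependent (snd (forC keys (D_ st) bd)) end.
  match goal with |- context [snd (forC keys (None, 0%R) ?bd)] =>
    assert (H2 : (snd (forC keys (None, 0%R) bd) <= k * S (k * 10))%nat)
      by (apply forC_cost; intros a x; apply forC_cost; intros b y; destruct b; cbn; lia);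
    generalize dependent (snd (forC keys (None, 0%R) bd)) end.
  match goal with |- context [snd (forC keys (S_ st, T_ st) ?bd)] =>
    assert (H3 : (snd (forC keys (S_ st, T_ st) bd) <= k * S (2 + k * 4))%nat)
      by (apply forC_cost; intros a x; destruct a as [Sa Ta];
          rewrite !snd_bind; cbn [snd fst op ret];
          assert (snd (forC keys Sa (fun (Sa0 : nat -> nat -> R) (v : nat) =>
                 suv <- op (Sa0 x v);;
                 mv <- op (m v);;
                 op
                   (upd2 Sa0 x v
                      (suv + Rpower alpha (- t) * INR mv / INR sz)%R))) <= k * 4)%nat
             by (apply forC_cost; intros b y; cbn; lia); lia);
    generalize dependent (snd (forC keys (S_ st, T_ st) bd)) end.
  intros n3 H3 n2 H2 n1 H1.
  assert (He : (1 <= length e)%nat) by (destruct e; [congruence|simpl; lia]).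
  assert (Hk3' : (k <= length e)%nat) by lia.
  assert (Hkk : (k * k <= Nat.min M (length e) ^ 2)%nat) by (simpl; rewrite Nat.mul_1_r; apply Nat.mul_le_mono; lia).
  nia.
Qed.
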